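(* Assume (A). Let $H\in(1,1+\lambda)$ be the unique abscissa with $f(H)=\mu H$. Let $M>2\mu/\sigma^2$, and let $A,b>0$ satisfy $$A>\max\Big\{M+H,\ \tfrac{f(0)}{c}M+H,\ \tfrac{\sigma^2M^2}{\sigma^2M-2\mu},\ \tfrac{f(0)}{c}\cdot\tfrac{\sigma^2M^2}{\sigma^2M-2\mu}\Big\},$$ $$\tfrac1M\max\Big\{\ln\tfrac{A}{A-M},\ \ln\tfrac{A}{A-\frac{f(0)}{c}M}\Big\}<b<\tfrac1M\min\Big\{\ln\tfrac{A}{H},\ \ln\big(\tfrac{\sigma^2}{2\mu}M\big)\Big\}.$$ Define $\underline\psi(x)=1-e^{-x}$ and $\overline\psi(x)=\frac AM\big(1-e^{-M(x\wedge b)}\big)$ for $x\ge0$. Then $\underline\psi$ is a viscosity subsolution and $\overline\psi$ is a viscosity supersolution of the ODE (E) on $[0,\infty)$, and $\underline\psi\le\overline\psi$ on $[0,\infty)$.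
   Context: Constants $\mu\in\mathbb R$, $\sigma>0$, $c>0$, $a>0$, $\lambda>0$; standing assumption (A): $a>\max\{1,2\mu\}$ and $\mu>\max\{c,\sigma^2/2\}$. $f(z)=\mu z+\lambda\ln\big[\lambda(e^{\frac{a}{\lambda}(1-z)}-1)/(1-z)\big]$ for $z\ne1$, $f(1)=\mu+\lambda\ln a$. The ODE (E) is $\frac12\sigma^2v''(x)+f(v'(x))-cv(x)=0$ on $[0,\infty)$ with $v(0)=0$. A function $u$ that is upper (resp. lower) semicontinuous on $[0,\infty)$ is a viscosity subsolution (resp. supersolution) of (E) if $u(0)=0$ and for every $x\in(0,\infty)$ and every $\varphi\in C^2(\mathbb R)$ with $0=(u-\varphi)(x)=\max_{y\in(0,\infty)}(u-\varphi)(y)$ (resp. $\min$), one has $\frac12\sigma^2\varphi''(x)+f(\varphi'(x))-cu(x)\ge0$ (resp. $\le0$). A viscosity solution is a continuous function that is both. *)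

(* Defs.v *)
From Stdlib Require Import Reals Lra.
From Coquelicot Require Import Coquelicot.
Open Scope R_scope.

Definition fE (mu a lambda : R) (z : R) : R :=
  match Req_EM_T z 1 with
  | left _ => mu + lambda * ln a
  | right _ => mu * z + lambda * ln (lambda * (exp (a / lambda * (1 - z)) - 1) / (1 - z))
  end.

Definition C2 (phi : R -> R) : Prop :=
  (forall x, ex_derive phi x) /\
  (forall x, ex_derive (Derive phi) x) /\
  (forall x, continuous (Derive (Derive phi)) x).

Definition usc_on_nonneg (u : R -> R) : Prop :=
  forall x, 0 <= x -> forall eps, 0 < eps -> exists delta, 0 < delta /\
    forall y, 0 <= y -> Rabs (y - x) < delta -> u y < u x + eps.

Definition lsc_on_nonneg (u : R -> R) : Prop :=
  forall x, 0 <= x -> forall eps, 0 < eps -> exists delta, 0 < delta /\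
    forall y, 0 <= y -> Rabs (y - x) < delta -> u x - eps < u y.

Definition visc_subsolution (mu sigma c a lambda : R) (u : R -> R) : Prop :=
  usc_on_nonneg u /\ u 0 = 0 /\
  forall x (phi : R -> R), 0 < x -> C2 phi ->
    u x - phi x = 0 ->
    (forall y, 0 < y -> u y - phi y <= u x - phi x) ->
    1 / 2 * sigma ^ 2 * Derive (Derive phi) x + fE mu a lambda (Derive phi x) - c * u x >= 0.

Definition visc_supersolution (mu sigma c a lambda : R) (u : R -> R) : Prop :=
  lsc_on_nonneg u /\ u 0 = 0 /\
  forall x (phi : R -> R), 0 < x -> C2 phi ->
    u x - phi x = 0 ->
    (forall y, 0 < y -> u x - phi x <= u y - phi y) ->
    1 / 2 * sigma ^ 2 * Derive (Derive phi) x + fE mu a lambda (Derive phi x) - c * u x <= 0.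

(* Main.v *)
Require Import Defs.
From Stdlib Require Import Reals Lra.
From Coquelicot Require Import Coquelicot.
Open Scope R_scope.

Lemma fermat_min (h : R -> R) x l d :
  0 < d -> derivable_pt_lim h x l ->
  (forall y, Rabs (y - x) < d -> h x <= h y) -> l = 0.
Proof.
intros Hd Hl Hmin.
pose (pr := exist (fun l => derivable_pt_lim h x l) l Hl : derivable_pt h x).
assert (E := deriv_minimum h (x - d) (x + d) x pr ltac:(lra) ltac:(lra)).
simpl in E. apply E. intros y H1 H2. apply Hmin. apply Rabs_def1; lra.
Qed.

Lemma second_min (h h' : R -> R) x dd d :
  0 < d -> (forall y, derivable_pt_lim h y (h' y)) -> derivable_pt_lim h' x dd ->
  (forall y, Rabs (y - x) < d -> h x <= h y) -> h' x = 0 /\ 0 <= dd.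
Proof.
intros Hd Hh Hh' Hmin.
assert (E0 : h' x = 0) by (apply (fermat_min h x (h' x) d); auto).
split; auto.
destruct (Rle_or_lt 0 dd) as [|Hneg]; auto. exfalso.
destruct (Hh' (- dd / 2) ltac:(lra)) as [del Hdel].
set (e := Rmin (del / 2) (d / 2)).
assert (He : 0 < e) by (unfold e; apply Rmin_glb_lt; destruct del; simpl; lra).
assert (He1 : e <= del / 2) by apply Rmin_l.
assert (He2 : e <= d / 2) by apply Rmin_r.
assert (Hpos : forall t, 0 < t <= e -> h' (x + t) < 0).
{ intros t Ht. assert (Ht0 : t <> 0) by lra.
  assert (Hta : Rabs t < del) by (rewrite Rabs_right; lra).
  specialize (Hdel t Ht0 Hta). rewrite E0 in Hdel.
  apply Rabs_def2 in Hdel. destruct Hdel as [Hd1 Hd2].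
  assert (h' (x + t) / t < 0) by lra.
  assert (h' (x + t) = (h' (x + t) / t) * t) by (field; lra).
  rewrite H0. apply Rmult_neg_pos; lra. }
destruct (MVT_cor2 h h' x (x + e) ltac:(lra)) as [c [Hc1 Hc2]].
{ intros c _. apply Hh. }
assert (h' c < 0).
{ replace c with (x + (c - x)) by ring. apply Hpos. lra. }
assert (h (x + e) - h x < 0) by (rewrite Hc1; apply Rmult_neg_pos; lra).
assert (h x <= h (x + e)) by (apply Hmin; rewrite Rabs_right; lra).
lra.
Qed.
Lemma exp_neg_mul t : exp (- t) * exp t = 1.
Proof. rewrite <- exp_plus. replace (-t + t) with 0 by ring. apply exp_0. Qed.

Lemma sinh_ineq t : 0 <= t -> 2 * t <= exp t - exp (- t).
Proof.
intros Ht. destruct (Req_dec t 0) as [->|Ht0].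
{ rewrite Ropp_0, exp_0. lra. }
set (k := fun t => exp t - exp (- t) - 2 * t).
set (k' := fun t => exp t + exp (- t) - 2).
destruct (MVT_cor2 k k' 0 t ltac:(lra)) as [c [Hc1 Hc2]].
{ intros c _. apply is_derive_Reals. unfold k, k'. auto_derive; auto. ring. }
assert (0 <= k' c).
{ unfold k'. assert (E := exp_neg_mul c). assert (P := exp_pos c).
  assert (exp (-c) = / exp c) by (field_simplify_eq; [lra| lra]).
  rewrite H. replace (exp c + / exp c - 2) with ((exp c - 1)^2 / exp c) by (field; lra).
  apply Rmult_le_pos; [apply pow2_ge_0| left; apply Rinv_0_lt_compat; lra]. }
assert (k 0 = 0) by (unfold k; rewrite Ropp_0, exp_0; ring).
assert (0 <= k t) by (assert (k t = k 0 + k' c * (t - 0)) by lra; nra).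
unfold k in H1. lra.
Qed.

Lemma key_low s : 0 < s -> s * exp (s / 2) <= exp s - 1.
Proof.
intros Hs. assert (H := sinh_ineq (s/2) ltac:(lra)).
assert (P := exp_pos (s/2)).
assert (E : exp s = exp (s/2) * exp (s/2)) by (rewrite <- exp_plus; f_equal; field).
assert (E2 := exp_neg_mul (s/2)).
rewrite E. nra.
Qed.

Lemma r_decr t1 t2 : 0 < t1 -> t1 <= t2 -> (1 - exp (- t2)) / t2 <= (1 - exp (- t1)) / t1.
Proof.
intros H1 H2. destruct (Req_dec t1 t2) as [<-|Hne]; [lra|].
set (m := fun t => (1 - exp (- t)) / t).
set (m' := fun t => (exp (- t) * t - (1 - exp (- t))) / (t * t)).
destruct (MVT_cor2 m m' t1 t2 ltac:(lra)) as [c [Hc1 Hc2]].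
{ intros c Hc. apply is_derive_Reals. unfold m, m'. auto_derive.
  - lra.
  - field. lra. }
assert (m' c <= 0).
{ unfold m'. assert (Hc0 : c <> 0) by lra. assert (I := exp_ineq1 c Hc0).
  assert (E := exp_neg_mul c). assert (P := exp_pos (-c)).
  assert (exp (- c) * c - (1 - exp (- c)) <= 0) by nra.
  unfold Rdiv. apply Rmult_le_0_r; auto. left. apply Rinv_0_lt_compat. nra. }
unfold m in Hc1. nra.
Qed.
Lemma q_eq a lambda p : 0 < lambda -> 0 < a -> p <> 1 ->
  lambda * (exp (a / lambda * (1 - p)) - 1) / (1 - p)
  = a * ((1 - exp (- (a / lambda * (p - 1)))) / (a / lambda * (p - 1))).
Proof.
intros. replace (- (a / lambda * (p - 1))) with (a / lambda * (1 - p)) by ring.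
field. repeat split; intro; apply H1; lra.
Qed.

Lemma f_low mu sigma c a lambda p : 0 < lambda -> a > 1 -> a > 2 * mu -> mu > c ->
  mu > sigma ^ 2 / 2 -> 0 < p < 1 ->
  c * (1 - p) + sigma ^ 2 / 2 * p <= fE mu a lambda p.
Proof.
intros Hl Ha1 Ha2 Hc Hs Hp. unfold fE. destruct (Req_EM_T p 1) as [E|Ne]; [lra|].
set (s := a / lambda * (1 - p)).
assert (Hs0 : 0 < s) by (unfold s; apply Rmult_lt_0_compat; [unfold Rdiv; apply Rmult_lt_0_compat; [lra|apply Rinv_0_lt_compat; lra]|lra]).
assert (K := key_low s Hs0).
assert (Q : lambda * (exp s - 1) / (1 - p) = a * ((exp s - 1) / s)).
{ unfold s. field. repeat split; lra. }
assert (P2 := exp_pos (s/2)).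
assert (B : exp (s / 2) <= lambda * (exp s - 1) / (1 - p)).
{ rewrite Q. assert (exp (s/2) <= (exp s - 1) / s).
  { apply Rmult_le_reg_r with s; auto. unfold Rdiv. rewrite Rmult_assoc, Rinv_l; lra. }
  nra. }
assert (L := ln_le _ _ P2 B). rewrite ln_exp in L.
assert (lambda * (s/2) <= lambda * ln (lambda * (exp s - 1) / (1 - p))) by (apply Rmult_le_compat_l; lra).
assert (lambda * (s / 2) = a * (1 - p) / 2) by (unfold s; field; lra).
nra.
Qed.

Lemma f_up mu a lambda H p : 0 < lambda -> 0 < a -> 1 < H -> H <= p ->
  fE mu a lambda H = mu * H -> fE mu a lambda p <= mu * p.
Proof.
intros Hl Ha HH Hp Hf. unfold fE in *.
destruct (Req_EM_T H 1) as [E|NeH]; [lra|].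
destruct (Req_EM_T p 1) as [E|Nep]; [lra|].
rewrite q_eq in * by lra.
set (t1 := a / lambda * (H - 1)) in *.
set (t2 := a / lambda * (p - 1)) in *.
assert (Hal : 0 < a / lambda) by (unfold Rdiv; apply Rmult_lt_0_compat; [lra|apply Rinv_0_lt_compat; lra]).
assert (T1 : 0 < t1) by (unfold t1; nra).
assert (T12 : t1 <= t2) by (unfold t1, t2; nra).
assert (R := r_decr t1 t2 T1 T12).
assert (Pos : forall t, 0 < t -> 0 < (1 - exp (- t)) / t).
{ intros t Ht. assert (exp (-t) < 1) by (rewrite <- exp_0; apply exp_increasing; lra).
  unfold Rdiv; apply Rmult_lt_0_compat; [lra|apply Rinv_0_lt_compat; lra]. }
assert (Z : ln (a * ((1 - exp (- t1)) / t1)) = 0) by nra.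
assert (Q1 : a * ((1 - exp (- t1)) / t1) = 1).
{ apply ln_inv. apply Rmult_lt_0_compat; auto. lra. rewrite Z, ln_1; auto. }
assert (Q2 : a * ((1 - exp (- t2)) / t2) <= 1) by (apply Rle_trans with (a * ((1 - exp (- t1)) / t1)); [apply Rmult_le_compat_l; lra | lra]).
assert (ln (a * ((1 - exp (- t2)) / t2)) <= 0).
{ rewrite <- ln_1. apply ln_le; auto. apply Rmult_lt_0_compat; auto. apply Pos; lra. }
nra.
Qed.

Lemma semi (U g : R -> R) x : continuity_pt U (g x) ->
  (forall y, Rabs (g y - g x) <= Rabs (y - x)) ->
  forall eps, 0 < eps -> exists delta, 0 < delta /\
    forall y, Rabs (y - x) < delta -> Rabs (U (g y) - U (g x)) < eps.
Proof.
intros HU Hg eps He. destruct (HU eps He) as [al [Hal Hf]]. exists al. split; auto.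
intros y Hy. destruct (Req_dec (g y) (g x)) as [E|NE].
- rewrite E, Rminus_eq_0, Rabs_R0; auto.
- apply (Hf (g y)). split. split; [exact I| auto].
  simpl. unfold R_dist. specialize (Hg y). lra.
Qed.

Lemma rmin_lip b x y : Rabs (Rmin y b - Rmin x b) <= Rabs (y - x).
Proof.
unfold Rmin. destruct (Rle_dec y b), (Rle_dec x b);
unfold Rabs; repeat destruct Rcase_abs; lra.
Qed.

Lemma C2_lims phi : C2 phi ->
  (forall y, derivable_pt_lim phi y (Derive phi y)) /\
  (forall y, derivable_pt_lim (Derive phi) y (Derive (Derive phi) y)).
Proof.
intros [H1 [H2 _]]. split; intros y; apply is_derive_Reals; apply Derive_correct; auto.
Qed.

Theorem proposition3p4 (mu sigma c a lambda H M A b : R)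
  (Hsigma : 0 < sigma) (Hc : 0 < c) (Ha0 : 0 < a) (Hlambda : 0 < lambda)
  (HA1 : a > Rmax 1 (2 * mu)) (HA2 : mu > Rmax c (sigma ^ 2 / 2))
  (HH : 1 < H < 1 + lambda) (HfH : fE mu a lambda H = mu * H)
  (HM : M > 2 * mu / sigma ^ 2)
  (HApos : 0 < A) (Hbpos : 0 < b)
  (HA : A > Rmax (Rmax (M + H) (fE mu a lambda 0 / c * M + H))
               (Rmax (sigma ^ 2 * M ^ 2 / (sigma ^ 2 * M - 2 * mu))
                     (fE mu a lambda 0 / c * (sigma ^ 2 * M ^ 2 / (sigma ^ 2 * M - 2 * mu)))))
  (Hb1 : 1 / M * Rmax (ln (A / (A - M))) (ln (A / (A - fE mu a lambda 0 / c * M))) < b)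
  (Hb2 : b < 1 / M * Rmin (ln (A / H)) (ln (sigma ^ 2 / (2 * mu) * M))) :
  let psi_low := fun x : R => 1 - exp (- x) in
  let psi_up := fun x : R => A / M * (1 - exp (- M * Rmin x b)) in
  visc_subsolution mu sigma c a lambda psi_low /\
  visc_supersolution mu sigma c a lambda psi_up /\
  (forall x, 0 <= x -> psi_low x <= psi_up x).
Proof.
cbv zeta.
set (f0 := fE mu a lambda 0) in *.
assert (Ha1 : a > 1) by (assert (T := Rmax_l 1 (2*mu)); lra).
assert (Ha2 : a > 2 * mu) by (assert (T := Rmax_r 1 (2*mu)); lra).
assert (Hmc : mu > c) by (assert (T := Rmax_l c (sigma^2/2)); lra).
assert (Hms : mu > sigma ^ 2 / 2) by (assert (T := Rmax_r c (sigma^2/2)); lra).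
assert (Hs2 : 0 < sigma ^ 2) by (apply pow_lt; lra).
assert (HMs : sigma ^ 2 * M > 2 * mu).
{ assert (2 * mu / sigma ^ 2 * sigma ^ 2 = 2 * mu) by (field; lra). nra. }
assert (HM1 : M > 1) by nra.
assert (HAMH : A > M + H /\ A > f0 / c * M + H).
{ assert (T1 := Rmax_l (Rmax (M + H) (f0 / c * M + H))
               (Rmax (sigma ^ 2 * M ^ 2 / (sigma ^ 2 * M - 2 * mu))
                     (f0 / c * (sigma ^ 2 * M ^ 2 / (sigma ^ 2 * M - 2 * mu))))).
  assert (T2 := Rmax_l (M + H) (f0 / c * M + H)).
  assert (T3 := Rmax_r (M + H) (f0 / c * M + H)). lra. }
destruct HAMH as [HAM HAf].
set (E := exp (- M * b)).
assert (HE : 0 < E) by apply exp_pos.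
assert (EE : E * exp (M * b) = 1).
{ unfold E. rewrite <- exp_plus. replace (- M * b + M * b) with 0 by ring. apply exp_0. }
assert (Hexp : forall X, 0 < X -> 1 / M * ln X < b -> E * X < 1).
{ intros X HX HL. assert (ln X < M * b).
  { apply Rmult_lt_compat_l with (r := M) in HL; [|lra].
    replace (M * (1 / M * ln X)) with (ln X) in HL by (field; lra). lra. }
  assert (X < exp (M * b)) by (rewrite <- (exp_ln X HX); apply exp_increasing; lra).
  nra. }
assert (E1 : E * A < A - M).
{ assert (T := Hexp (A / (A - M)) ltac:(apply Rdiv_lt_0_compat; lra)
     ltac:(assert (T := Rmax_l (ln (A / (A - M))) (ln (A / (A - f0 / c * M))));
           assert (0 < 1 / M) by (apply Rdiv_lt_0_compat; lra);
           eapply Rle_lt_trans; [|exact Hb1]; apply Rmult_le_compat_l; lra)).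
  assert (E * (A / (A - M)) * (A - M) = E * A) by (field; lra). nra. }
assert (E2 : E * A < A - f0 / c * M).
{ assert (T := Hexp (A / (A - f0 / c * M)) ltac:(apply Rdiv_lt_0_compat; lra)
     ltac:(assert (T := Rmax_r (ln (A / (A - M))) (ln (A / (A - f0 / c * M))));
           assert (0 < 1 / M) by (apply Rdiv_lt_0_compat; lra);
           eapply Rle_lt_trans; [|exact Hb1]; apply Rmult_le_compat_l; lra)).
  assert (E * (A / (A - f0 / c * M)) * (A - f0 / c * M) = E * A).
  { unfold Rdiv at 1. rewrite Rmult_assoc, Rmult_assoc, Rinv_l by lra. ring. }
  assert (E * (A / (A - f0 / c * M)) * (A - f0 / c * M) < 1 * (A - f0 / c * M)) by (apply Rmult_lt_compat_r; lra).
  lra. }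
assert (E3 : H < A * E).
{ assert (T := Rmin_l (ln (A / H)) (ln (sigma ^ 2 / (2 * mu) * M))).
  assert (0 < 1 / M) by (apply Rdiv_lt_0_compat; lra).
  assert (HL : 1 / M * ln (A / H) > b).
  { eapply Rlt_le_trans; [exact Hb2|]. apply Rmult_le_compat_l; lra. }
  assert (ln (A / H) > M * b).
  { apply Rmult_lt_compat_l with (r := M) in HL; [|lra].
    replace (M * (1 / M * ln (A / H))) with (ln (A / H)) in HL by (field; lra). lra. }
  assert (exp (M * b) < A / H).
  { rewrite <- (exp_ln (A / H)) by (apply Rdiv_lt_0_compat; lra). apply exp_increasing; lra. }
  assert (exp (M * b) * H < A).
  { apply Rmult_lt_compat_r with (r := H) in H2; [|lra].
    replace (A / H * H) with A in H2 by (field; lra). lra. }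
  nra. }
set (U := fun y => A / M * (1 - exp (- M * y))).
assert (dU : forall y, derivable_pt_lim U y (A * exp (- M * y))).
{ intros y. apply is_derive_Reals. unfold U. auto_derive; auto. field. lra. }
assert (ddU : forall y, derivable_pt_lim (fun y => A * exp (- M * y)) y (- M * (A * exp (- M * y)))).
{ intros y. apply is_derive_Reals. auto_derive; auto. ring. }
assert (dL : forall y, derivable_pt_lim (fun y => 1 - exp (- y)) y (exp (- y))).
{ intros y. apply is_derive_Reals. auto_derive; auto. ring. }
assert (ddL : forall y, derivable_pt_lim (fun y => exp (- y)) y (- exp (- y))).
{ intros y. apply is_derive_Reals. auto_derive; auto. ring. }
assert (UE : U b = A / M * (1 - E)) by reflexivity.
assert (Umono : forall y, y <= b -> U y <= U b).
{ intros y Hy. unfold U. assert (exp (- M * y) >= exp (- M * b)).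
  { destruct (Req_dec y b) as [->|]; [lra|]. left. apply exp_increasing. nra. }
  assert (0 < A / M) by (apply Rdiv_lt_0_compat; lra). nra. }
assert (Umono2 : forall y, b <= y -> U b <= U y).
{ intros y Hy. unfold U. assert (exp (- M * y) <= exp (- M * b)).
  { destruct (Req_dec y b) as [->|]; [lra|]. left. apply exp_increasing. nra. }
  assert (0 < A / M) by (apply Rdiv_lt_0_compat; lra). nra. }
assert (Pup : forall y, A / M * (1 - exp (- M * Rmin y b)) = U (Rmin y b)) by reflexivity.
split; [|split].
-
  split; [|split].
  + intros x Hx eps He.
    destruct (semi (fun y => 1 - exp (- y)) (fun y => y) x) with (eps := eps) as [d [Hd Hd2]]; auto.
    { apply derivable_continuous_pt. exists (exp (- x)). apply dL. }
    { intros; lra. }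
    exists d; split; auto. intros y _ Hy. specialize (Hd2 y Hy). apply Rabs_def2 in Hd2. lra.
  + rewrite Ropp_0, exp_0. ring.
  + intros x phi Hx HC2 _ Hmax. destruct (C2_lims phi HC2) as [D1 D2].
    destruct (second_min (fun y => phi y - (1 - exp (- y))) (fun y => Derive phi y - exp (- y)) x
       (Derive (Derive phi) x - - exp (- x)) x Hx) as [F1 F2].
    { intros y. apply derivable_pt_lim_minus; auto. }
    { apply derivable_pt_lim_minus; auto. }
    { intros y Hy. assert (0 < y) by (apply Rabs_def2 in Hy; lra). specialize (Hmax y H0). lra. }
    assert (Hp : 0 < exp (- x) < 1).
    { split. apply exp_pos. rewrite <- exp_0. apply exp_increasing. lra. }
    assert (Fl := f_low mu sigma c a lambda (exp (- x)) Hlambda Ha1 Ha2 Hmc Hms Hp).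
    replace (Derive phi x) with (exp (- x)) by lra.
    assert (1 / 2 * sigma ^ 2 * Derive (Derive phi) x >= - (sigma ^ 2 / 2) * exp (- x)) by nra.
    lra.
-
  split; [|split].
  + intros x Hx eps He.
    destruct (semi U (fun y => Rmin y b) x) with (eps := eps) as [d [Hd Hd2]]; auto.
    { apply derivable_continuous_pt. exists (A * exp (- M * Rmin x b)). apply dU. }
    { intros; apply rmin_lip. }
    exists d; split; auto. intros y _ Hy. specialize (Hd2 y Hy). apply Rabs_def2 in Hd2.
    rewrite !Pup. lra.
  + rewrite Rmin_left by lra. replace (- M * 0) with 0 by ring. rewrite exp_0. ring.
  + intros x phi Hx HC2 _ Hmin. destruct (C2_lims phi HC2) as [D1 D2].
    rewrite !Pup in *.
    destruct (Rtotal_order x b) as [Hxb|[Hxb|Hxb]].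
    *
      set (d := Rmin x (b - x)).
      assert (Hd : 0 < d) by (unfold d; apply Rmin_glb_lt; lra).
      assert (Hd1 : d <= x) by apply Rmin_l. assert (Hd2 : d <= b - x) by apply Rmin_r.
      destruct (second_min (fun y => U y - phi y) (fun y => A * exp (- M * y) - Derive phi y) x
         (- M * (A * exp (- M * x)) - Derive (Derive phi) x) d Hd) as [F1 F2].
      { intros y. apply derivable_pt_lim_minus; auto. }
      { apply derivable_pt_lim_minus; auto. }
      { intros y Hy. cbv beta. apply Rabs_def2 in Hy. assert (0 < y) by lra. specialize (Hmin y H0). rewrite ?Pup in Hmin.
        rewrite !Rmin_left in Hmin by lra. lra. }
      rewrite Rmin_left by lra.
      set (p := A * exp (- M * x)) in *.
      assert (Hp1 : H <= p).
      { unfold p. assert (exp (- M * b) < exp (- M * x)) by (apply exp_increasing; nra).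
        fold E in H0. nra. }
      assert (Hp2 : p < A).
      { unfold p. assert (exp (- M * x) < 1) by (rewrite <- exp_0; apply exp_increasing; nra). nra. }
      assert (Fu := f_up mu a lambda H p Hlambda Ha0 (proj1 HH) Hp1 HfH).
      replace (Derive phi x) with p by lra.
      assert (U x = (A - p) / M) by (unfold U, p; field; lra).
      rewrite H0.
      assert (0 <= c * ((A - p) / M)) by (apply Rmult_le_pos; [lra|apply Rdiv_le_0_compat; lra]).
      assert (1 / 2 * sigma ^ 2 * Derive (Derive phi) x <= - (sigma ^ 2 * M / 2) * p) by nra.
      assert (mu * p <= sigma ^ 2 * M / 2 * p) by nra.
      lra.
    *
      subst x. exfalso.
      assert (G1 : A * exp (- M * b) - Derive phi b = 0).
      { apply (fermat_min (fun y => U y - phi y) b _ b Hbpos).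
        { apply derivable_pt_lim_minus; auto. }
        intros y Hy. apply Rabs_def2 in Hy. assert (0 < y) by lra. specialize (Hmin y H0). rewrite ?Pup in Hmin.
        rewrite Rmin_left in Hmin by lra.
        destruct (Rle_or_lt y b).
        - rewrite Rmin_left in Hmin by lra. lra.
        - rewrite Rmin_right in Hmin by lra. assert (T := Umono2 y ltac:(lra)). lra. }
      assert (G2 : - Derive phi b = 0).
      { apply (fermat_min (fun y => U b - phi y) b _ b Hbpos).
        { replace (- Derive phi b) with (0 - Derive phi b) by ring.
          apply derivable_pt_lim_minus; auto. apply derivable_pt_lim_const. }
        intros y Hy. apply Rabs_def2 in Hy. assert (0 < y) by lra. specialize (Hmin y H0). rewrite ?Pup in Hmin.
        rewrite Rmin_left in Hmin by lra.
        destruct (Rle_or_lt y b).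
        - rewrite Rmin_left in Hmin by lra. assert (T := Umono y ltac:(lra)). lra.
        - rewrite Rmin_right in Hmin by lra. lra. }
      assert (0 < A * exp (- M * b)) by (apply Rmult_lt_0_compat; [lra|apply exp_pos]).
      lra.
    *
      destruct (second_min (fun y => U b - phi y) (fun y => 0 - Derive phi y) x
         (0 - Derive (Derive phi) x) (x - b) ltac:(lra)) as [F1 F2].
      { intros y. apply derivable_pt_lim_minus; auto. apply derivable_pt_lim_const. }
      { apply derivable_pt_lim_minus; auto. apply derivable_pt_lim_const. }
      { intros y Hy. cbv beta. apply Rabs_def2 in Hy. assert (0 < y) by lra. specialize (Hmin y H0). rewrite ?Pup in Hmin.
        rewrite !Rmin_right in Hmin by lra. lra. }
      rewrite Rmin_right by lra.
      replace (Derive phi x) with 0 by lra. fold f0.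
      rewrite UE.
      assert (f0 <= c * (A / M * (1 - E))).
      { assert (c * (A / M * (1 - E)) = c / M * (A - E * A)) by (field; lra).
        rewrite H0. assert (c / M * (A - (A - f0 / c * M)) = f0) by (field; lra).
        assert (0 < c / M) by (apply Rdiv_lt_0_compat; lra). nra. }
      nra.
-
  intros x Hx. rewrite Pup.
  destruct (Rle_or_lt x b).
  + rewrite Rmin_left by lra. unfold U.
    assert (exp (- M * x) <= exp (- x)).
    { destruct (Req_dec x 0) as [->|]. replace (- M * 0) with (- 0) by ring. lra.
      left. apply exp_increasing. nra. }
    assert (exp (- M * x) <= 1) by (rewrite <- exp_0; destruct (Req_dec x 0) as [->|];
      [replace (- M * 0) with 0 by ring; lra| left; apply exp_increasing; nra]).
    assert (A / M > 1).
    { apply Rmult_lt_reg_r with M; [lra|]. replace (A / M * M) with A by (field; lra). lra. }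
    nra.
  + rewrite Rmin_right by lra. rewrite UE.
    assert (A / M * (1 - E) > 1).
    { assert (A / M * (1 - E) = (A - E * A) / M) by (field; lra). rewrite H1.
      apply Rmult_lt_reg_r with M; [lra|]. replace ((A - E * A) / M * M) with (A - E * A) by (field; lra). lra. }
    assert (0 < exp (- x)) by apply exp_pos. lra.
Qed.
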